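(* Let $1\le p<\infty$ and let $X$ be an infinite dimensional Banach space. Then $\ell_p^+(X) - \ell_p^w(X)$ is maximal spaceable in $\ell_p^+(X)$ endowed with its locally convex topology.
   Context: $\mathbb{K}=\mathbb{R}$ or $\mathbb{C}$. For $1\le p<\infty$, $\ell_p^+(X):=\bigcap_{q>p}\ell_q(X)$, where $\ell_q(X)$ is the space of $X$-valued sequences with $\|(x_n)\|_q=(\sum_n\|x_n\|^q)^{1/q}<\infty$, endowed with the locally convex (Fréchet) topology generated by the family of norms $(\|\cdot\|_q)_{q>p}$. $\ell_p^w(X)$ is the space of weakly $p$-summable sequences ($(\varphi(x_n))_n\in\ell_p$ for every $\varphi\in X'$). For sets $A,B$ of sequences, $A-B:=A\setminus B$. A subset $A$ of a topological vector space $V$ is maximal spaceable if $A\cup\{0\}$ contains a closed linear subspace of $V$ of dimension $\dim V$. *)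

(* Defs.v *)
From Stdlib Require Import Reals List.
Open Scope R_scope.
Set Implicit Arguments.

(** Scalar fields: K = R or K = C (C modelled as R*R). *)
Record Scal := {
  sc :> Type;
  s0 : sc; s1 : sc;
  sadd : sc -> sc -> sc; smul : sc -> sc -> sc; sopp : sc -> sc;
  sabs : sc -> R }.

Definition RScal : Scal := @Build_Scal R 0 1 Rplus Rmult Ropp Rabs.

Definition Cx := (R * R)%type.
Definition CScal : Scal :=
  @Build_Scal Cx (0,0) (1,0)
    (fun a b => (fst a + fst b, snd a + snd b))
    (fun a b => (fst a * fst b - snd a * snd b, fst a * snd b + snd a * fst b))
    (fun a => (- fst a, - snd a))
    (fun a => sqrt (fst a ^ 2 + snd a ^ 2)).

Definition scalar_field (k : bool) : Scal := if k then CScal else RScal.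

Record Banach (K : Scal) := {
  vc :> Type;
  v0 : vc;
  vadd : vc -> vc -> vc;
  vopp : vc -> vc;
  vscal : K -> vc -> vc;
  vnorm : vc -> R;
  vadd_assoc : forall x y z, vadd x (vadd y z) = vadd (vadd x y) z;
  vadd_comm : forall x y, vadd x y = vadd y x;
  vadd_0 : forall x, vadd x v0 = x;
  vadd_opp : forall x, vadd x (vopp x) = v0;
  vscal_1 : forall x, vscal (s1 K) x = x;
  vscal_assoc : forall a b x, vscal a (vscal b x) = vscal (smul K a b) x;
  vscal_distr_v : forall a x y, vscal a (vadd x y) = vadd (vscal a x) (vscal a y);
  vscal_distr_s : forall a b x, vscal (sadd K a b) x = vadd (vscal a x) (vscal b x);
  vnorm_nonneg : forall x, 0 <= vnorm x;
  vnorm_eq0 : forall x, vnorm x = 0 -> x = v0;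
  vnorm_scal : forall a x, vnorm (vscal a x) = sabs K a * vnorm x;
  vnorm_triangle : forall x y, vnorm (vadd x y) <= vnorm x + vnorm y;
  vcomplete : forall u : nat -> vc,
    (forall eps, 0 < eps -> exists N, forall m n, (N <= m)%nat -> (N <= n)%nat ->
        vnorm (vadd (u m) (vopp (u n))) < eps) ->
    exists l, forall eps, 0 < eps -> exists N, forall n, (N <= n)%nat ->
        vnorm (vadd (u n) (vopp l)) < eps }.

Arguments v0 {K} b : rename.
Arguments vadd {K} [b] : rename.
Arguments vopp {K} [b] : rename.
Arguments vscal {K} [b] : rename.
Arguments vnorm {K} [b] : rename.

Section Defs.
Context {K : Scal} {X : Banach K}.

Definition vsub (x y : X) : X := vadd x (vopp y).

Definition lin_comb (l : list (K * X)) : X :=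
  fold_right (fun pr acc => vadd (vscal (fst pr) (snd pr)) acc) (v0 X) l.

Definition infinite_dim : Prop :=
  ~ exists l : list X, forall x : X, exists lc : list (K * X),
      map snd lc = l /\ x = lin_comb lc.

Definition rpow (x q : R) : R := if Rlt_dec 0 x then Rpower x q else 0.

Fixpoint psum (f : nat -> R) (N : nat) : R :=
  match N with O => 0 | S n => psum f n + f n end.

Definition summable (f : nat -> R) : Prop := exists M, forall N, psum f N <= M.

Definition in_lq (q : R) (x : nat -> X) : Prop :=
  summable (fun n => rpow (vnorm (x n)) q).

Definition lpplus (p : R) (x : nat -> X) : Prop := forall q, p < q -> in_lq q x.

Definition linear_fun (phi : X -> K) : Prop :=
  (forall x y, phi (vadd x y) = sadd K (phi x) (phi y)) /\
  (forall a x, phi (vscal a x) = smul K a (phi x)).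

Definition continuous_fun (phi : X -> K) : Prop :=
  forall x eps, 0 < eps -> exists delta, 0 < delta /\
    forall y, vnorm (vsub y x) < delta -> sabs K (sadd K (phi y) (sopp K (phi x))) < eps.

Definition weakly_summable (p : R) (x : nat -> X) : Prop :=
  forall phi : X -> K, linear_fun phi -> continuous_fun phi ->
    summable (fun n => rpow (sabs K (phi (x n))) p).

Definition zero_seq : nat -> X := fun _ => v0 X.
Definition add_seq (x y : nat -> X) : nat -> X := fun n => vadd (x n) (y n).
Definition scal_seq (a : K) (x : nat -> X) : nat -> X := fun n => vscal a (x n).
Definition seq_lin_comb (l : list (K * (nat -> X))) : nat -> X :=
  fun n => lin_comb (map (fun pr => (fst pr, snd pr n)) l).

Definition subspace (S : (nat -> X) -> Prop) : Prop :=
  S zero_seq /\ (forall x y, S x -> S y -> S (add_seq x y)) /\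
  (forall a x, S x -> S (scal_seq a x)).

Definition lin_indep (B : (nat -> X) -> Prop) : Prop :=
  forall l : list (K * (nat -> X)),
    NoDup (map snd l) -> Forall (fun pr => B (snd pr)) l ->
    seq_lin_comb l = zero_seq -> Forall (fun pr => fst pr = s0 K) l.

Definition hamel_basis (B S : (nat -> X) -> Prop) : Prop :=
  (forall b, B b -> S b) /\ lin_indep B /\
  (forall s, S s -> exists l, Forall (fun pr => B (snd pr)) l /\ s = seq_lin_comb l).

Definition same_dim (S T : (nat -> X) -> Prop) : Prop :=
  exists (B B' : (nat -> X) -> Prop) (f : (nat -> X) -> (nat -> X)),
    hamel_basis B S /\ hamel_basis B' T /\
    (forall b, B b -> B' (f b)) /\
    (forall b1 b2, B b1 -> B b2 -> f b1 = f b2 -> b1 = b2) /\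
    (forall b', B' b' -> exists b, B b /\ f b = b').

(** Locally convex topology on l_p^+(X) generated by the norms ||.||_q, q > p:
    U is open iff around each point it contains a finite intersection of
    (closed) balls { y | sum_n ||y_n - x_n||^q <= eps }, q > p. *)
Definition lpplus_open (p : R) (U : (nat -> X) -> Prop) : Prop :=
  (forall x, U x -> lpplus p x) /\
  forall x, U x -> exists (qs : list R) (eps : R),
    Forall (fun q => p < q) qs /\ 0 < eps /\
    forall y, lpplus p y ->
      Forall (fun q => forall N, psum (fun n => rpow (vnorm (vsub (y n) (x n))) q) N <= eps) qs ->
      U y.

Definition lpplus_closed (p : R) (C : (nat -> X) -> Prop) : Prop :=
  (forall x, C x -> lpplus p x) /\ lpplus_open p (fun x => lpplus p x /\ ~ C x).

Definition maximal_spaceable (p : R) (A : (nat -> X) -> Prop) : Prop :=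
  exists W : (nat -> X) -> Prop,
    subspace W /\ lpplus_closed p W /\
    (forall x, W x -> A x \/ x = zero_seq) /\
    same_dim W (lpplus p).

End Defs.
Arguments infinite_dim {K} X.
Arguments zero_seq {K} {X}.

(* Main.v *)
Require Import Defs.
From Stdlib Require Import Reals List.
From Stdlib Require Import Classical ClassicalEpsilon FunctionalExtensionality Lra Lia Arith Cantor.
From mathcomp Require classical_sets.
Open Scope R_scope.

Lemma zorn_sets (T:Type) (P : (T -> Prop) -> Prop):
 (forall F : (T->Prop) -> Prop, (forall A, F A -> P A) ->
   (forall A B, F A -> F B -> (forall z, A z -> B z) \/ (forall z, B z -> A z)) ->
   P (fun z => exists2 A, F A & A z)) ->
 exists A, P A /\ forall B, (forall z, A z -> B z) -> P B -> forall z, B z -> A z.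
Proof.
intros H.
destruct (@classical_sets.Zorn_bigcup T P) as [A [HA Hm]].
- intros F HF Htot. apply (H F HF Htot).
- exists A. split; auto. intros B HAB HB z Bz.
  apply NNPP; intro Hn. apply (Hm B); [split; [exact HAB|] | exact HB].
  intro HBA. apply Hn, HBA, Bz.
Qed.

Section HBs.
Variable V : Type.
Variables (zero : V) (add : V -> V -> V) (opp : V -> V) (scal : R -> V -> V) (nrm : V -> R).
Hypothesis add_assoc : forall x y z, add x (add y z) = add (add x y) z.
Hypothesis add_comm : forall x y, add x y = add y x.
Hypothesis add_0 : forall x, add x zero = x.
Hypothesis add_opp : forall x, add x (opp x) = zero.
Hypothesis scal_1 : forall x, scal 1 x = x.
Hypothesis scal_assoc : forall a b x, scal a (scal b x) = scal (a * b) x.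
Hypothesis distr_v : forall a x y, scal a (add x y) = add (scal a x) (scal a y).
Hypothesis distr_s : forall a b x, scal (a + b) x = add (scal a x) (scal b x).
Hypothesis nrm_scal : forall a x, nrm (scal a x) = Rabs a * nrm x.
Hypothesis nrm_tri : forall x y, nrm (add x y) <= nrm x + nrm y.
Hypothesis nrm_nonneg : forall x, 0 <= nrm x.
Variable v : V.

Lemma hb_idem u : add u u = u -> u = zero.
Proof.
intro H. assert (E: add (add u u) (opp u) = u) by (rewrite <- add_assoc, add_opp, add_0; auto).
rewrite H, add_opp in E. auto.
Qed.
Lemma hb_scal0 x : scal 0 x = zero.
Proof. apply hb_idem. rewrite <- distr_s. f_equal. ring. Qed.
Lemma hb_add0l x : add zero x = x.
Proof. rewrite add_comm; auto. Qed.
Lemma hb_opp_uniq x w : add x w = zero -> w = opp x.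
Proof.
intro H. rewrite <- (add_0 w), <- (add_opp x), add_assoc, (add_comm w x), H, hb_add0l. auto.
Qed.
Lemma hb_opp_scal x : opp x = scal (-1) x.
Proof.
symmetry. apply hb_opp_uniq. rewrite <- (scal_1 x) at 1. rewrite <- distr_s.
replace (1 + -1) with 0 by ring. apply hb_scal0.
Qed.
Lemma hb_nrm0 : nrm zero = 0.
Proof. rewrite <- (hb_scal0 zero), nrm_scal, Rabs_R0. ring. Qed.

Definition good (G : V * R -> Prop) :=
  (forall x a y b, G (x,a) -> G (y,b) -> G (add x y, a + b)) /\
  (forall r x a, G (x,a) -> G (scal r x, r * a)) /\
  (forall x a, G (x,a) -> a <= nrm x).

Definition G0 (z : V * R) := exists t, z = (scal t v, t * nrm v).

Definition PP (G : V * R -> Prop) := good (fun z => G z \/ G0 z).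

Lemma G0_good : good G0.
Proof.
split; [|split].
- intros x a y b [t Ht] [s Hs]. injection Ht; injection Hs; intros; subst.
  exists (t + s). rewrite distr_s. f_equal. ring.
- intros r x a [t Ht]. injection Ht; intros; subst. exists (r * t).
  rewrite scal_assoc. f_equal. ring.
- intros x a [t Ht]. injection Ht; intros; subst. rewrite nrm_scal.
  apply Rmult_le_compat_r; auto. apply Rle_abs.
Qed.

Lemma good_sub (G H : V * R -> Prop) :
  good G -> (forall z, H z -> G z) -> (forall z, G z -> H z) -> good H.
Proof.
intros [h1 [h2 h3]] a b. split; [|split]; intros; auto.
Qed.

Lemma chain_good (F : (V * R -> Prop) -> Prop) :
  (forall A, F A -> PP A) ->
  (forall A B, F A -> F B -> (forall z, A z -> B z) \/ (forall z, B z -> A z)) ->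
  PP (fun z => exists2 A, F A & A z).
Proof.
intros HF Hc.
set (U := fun z => exists2 A, F A & A z).
assert (key : forall z1 z2, (U z1 \/ G0 z1) -> (U z2 \/ G0 z2) ->
   exists A0 : V * R -> Prop, good (fun z => A0 z \/ G0 z) /\ (forall z, A0 z -> U z) /\
     (A0 z1 \/ G0 z1) /\ (A0 z2 \/ G0 z2)).
{ intros z1 z2 H1 H2.
  destruct H1 as [[A1 FA1 A1z]|G1]; destruct H2 as [[A2 FA2 A2z]|G2].
  - destruct (Hc A1 A2 FA1 FA2) as [s|s].
    + exists A2. split; [apply HF; auto|]. split; [intros z Az; exists A2; auto|]. split; left; auto.
    + exists A1. split; [apply HF; auto|]. split; [intros z Az; exists A1; auto|]. split; left; auto.
  - exists A1. split; [apply HF; auto|]. split; [intros z Az; exists A1; auto|]. split; auto.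
  - exists A2. split; [apply HF; auto|]. split; [intros z Az; exists A2; auto|]. split; auto.
  - exists (fun _ => False). split.
    + apply (good_sub G0); [apply G0_good| |]; intros z Hz; tauto.
    + split; [intros z []|]. split; auto. }
split; [|split].
- intros x a y b H1 H2. destruct (key _ _ H1 H2) as [A0 [[g1 _] [sub [k1 k2]]]].
  destruct (g1 _ _ _ _ k1 k2); [left; apply sub|right]; auto.
- intros r x a H1. destruct (key _ _ H1 H1) as [A0 [[_ [g2 _]] [sub [k1 _]]]].
  destruct (g2 r _ _ k1); [left; apply sub|right]; auto.
- intros x a H1. destruct (key _ _ H1 H1) as [A0 [[_ [_ g3]] [sub [k1 _]]]].
  apply (g3 _ _ k1).
Qed.

Lemma vec_id1 x t y s z :
  add (add x (scal t z)) (add y (scal s z)) = add (add x y) (scal (t + s) z).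
Proof.
rewrite distr_s. rewrite !add_assoc. f_equal.
rewrite <- !add_assoc. f_equal. apply add_comm.
Qed.

Lemma extend (G : V * R -> Prop) (z : V) :
  good G -> G (zero, 0) -> (forall a, ~ G (z, a)) ->
  exists c, good (fun w => exists x a t, G (x, a) /\ w = (add x (scal t z), a + t * c)).
Proof.
intros [g1 [g2 g3]] G00 nz.
set (A := fun r => exists y b, G (y, b) /\ r = b - nrm (add y (opp z))).
assert (Abnd : bound A).
{ exists (nrm z). intros r [y [b [Gy ->]]].
  assert (b <= nrm y) by (apply g3; auto).
  assert (nrm y <= nrm (add y (opp z)) + nrm z).
  { replace y with (add (add y (opp z)) z) at 1.
    - apply nrm_tri.
    - rewrite <- add_assoc, (add_comm (opp z) z), add_opp, add_0; auto. }
  lra. }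
assert (Ane : exists r, A r).
{ exists (0 - nrm (add zero (opp z))). exists zero, 0. auto. }
destruct (completeness A Abnd Ane) as [c [cub club]].
exists c.
assert (cle : forall y b, G (y, b) -> c <= nrm (add y z) - b).
{ intros y b Gy. apply club. intros r [x [a [Gx ->]]].
  assert (a + b <= nrm (add x y)) by (apply g3; auto).
  assert (nrm (add x y) <= nrm (add x (opp z)) + nrm (add y z)).
  { replace (add x y) with (add (add x (opp z)) (add y z)).
    - apply nrm_tri.
    - rewrite (add_comm y z), !add_assoc. f_equal.
      rewrite <- add_assoc, (add_comm (opp z) z), add_opp, add_0; auto. }
  lra. }
assert (cge : forall y b, G (y, b) -> b - nrm (add y (opp z)) <= c).
{ intros y b Gy. apply cub. exists y, b. auto. }
split; [|split].
- intros x1 a1 x2 a2 [y [b [t [Gy E1]]]] [y' [b' [t' [Gy' E2]]]].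
  injection E1; injection E2; intros; subst.
  exists (add y y'), (b + b'), (t + t'). split; [apply g1; auto|].
  rewrite vec_id1. f_equal. ring.
- intros r x a [y [b [t [Gy E1]]]]. injection E1; intros; subst.
  exists (scal r y), (r * b), (r * t). split; [apply g2; auto|].
  rewrite distr_v, scal_assoc. f_equal. ring.
- intros x a [y [b [t [Gy E1]]]]. injection E1; intros; subst.
  destruct (Rtotal_order t 0) as [tn|[t0|tp]].
  + set (s := - t). assert (sp : 0 < s) by (unfold s; lra).
    assert (H := cge _ _ (g2 (/ s) _ _ Gy)).
    assert (E : add y (scal t z) = scal s (add (scal (/ s) y) (opp z))).
    { rewrite distr_v, scal_assoc, Rinv_r by lra. rewrite scal_1, hb_opp_scal, scal_assoc.
      f_equal. f_equal. unfold s; ring. }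
    rewrite E, nrm_scal, Rabs_right by lra.
    apply Rmult_le_compat_l with (r := s) in H; [|lra].
    replace (s * (/ s * b - nrm (add (scal (/ s) y) (opp z)))) with
      (b - s * nrm (add (scal (/ s) y) (opp z))) in H by (field; lra).
    replace t with (- s) by (unfold s; ring). lra.
  + subst. rewrite hb_scal0, add_0. replace (b + 0 * c) with b by ring. apply g3; auto.
  + assert (H := cle _ _ (g2 (/ t) _ _ Gy)).
    assert (E : add y (scal t z) = scal t (add (scal (/ t) y) z)).
    { rewrite distr_v, scal_assoc, Rinv_r by lra. rewrite scal_1. auto. }
    rewrite E, nrm_scal, Rabs_right by lra.
    apply Rmult_le_compat_l with (r := t) in H; [|lra].
    replace (t * (nrm (add (scal (/ t) y) z) - / t * b)) with
      (t * nrm (add (scal (/ t) y) z) - b) in H by (field; lra).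
    lra.
Qed.

Theorem hahn_banach_real :
  exists f : V -> R, (forall x y, f (add x y) = f x + f y) /\
    (forall r x, f (scal r x) = r * f x) /\ (forall x, Rabs (f x) <= nrm x) /\ f v = nrm v.
Proof.
destruct (zorn_sets (V * R) PP) as [M [PM Mmax]].
{ intros F HF Hc. apply chain_good; auto. }
set (G := fun z => M z \/ G0 z).
assert (gG : good G) by exact PM.
destruct gG as [g1 [g2 g3]].
assert (G00 : G (zero, 0)).
{ right. exists 0. rewrite hb_scal0. f_equal. ring. }
assert (func : forall x a b, G (x, a) -> G (x, b) -> a = b).
{ intros x a b Ha Hb.
  assert (H1 := g3 _ _ (g1 _ _ _ _ Ha (g2 (-1) _ _ Hb))).
  assert (H2 := g3 _ _ (g1 _ _ _ _ Hb (g2 (-1) _ _ Ha))).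
  rewrite <- hb_opp_scal, add_opp, hb_nrm0 in H1, H2. lra. }
assert (total : forall x, exists a, G (x, a)).
{ intro z. apply NNPP. intro nz.
  assert (nz' : forall a, ~ G (z, a)) by (intros a Ha; apply nz; exists a; auto).
  destruct (extend G z PM G00 nz') as [c Hc].
  set (H := fun w => exists x a t, G (x, a) /\ w = (add x (scal t z), a + t * c)).
  assert (GH : forall w, G w -> H w).
  { intros [x a] Gw. exists x, a, 0. split; auto. rewrite hb_scal0, add_0. f_equal. ring. }
  assert (PH : PP H).
  { apply (good_sub H); auto. intros w [Hw|Hw]; auto. apply GH; right; auto. }
  assert (Hz : H (z, c)).
  { exists zero, 0, 1. split; auto. rewrite hb_add0l, scal_1. f_equal. ring. }
  assert (MH : forall w, M w -> H w) by (intros w Mw; apply GH; left; auto).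
  assert (HM := Mmax H MH PH _ Hz).
  apply (nz' c). left; auto. }
set (f := fun x => proj1_sig (constructive_indefinite_description _ (total x))).
assert (fG : forall x, G (x, f x)).
{ intro x. unfold f. destruct (constructive_indefinite_description _ (total x)); auto. }
exists f. split; [|split; [|split]].
- intros x y. apply func with (add x y); auto.
- intros r x. apply func with (scal r x); auto.
- intros x. apply Rabs_le. split.
  + assert (H := g3 _ _ (fG (scal (-1) x))).
    assert (E : f (scal (-1) x) = -1 * f x) by (apply func with (scal (-1) x); auto).
    rewrite E, nrm_scal in H. replace (Rabs (-1)) with 1 in H by (rewrite Rabs_left; lra). lra.
  + apply g3; auto.
- apply func with v; auto. right. exists 1. rewrite scal_1. f_equal. ring.
Qed.
End HBs.

Definition emb (k : bool) : R -> scalar_field k :=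
  match k as b return R -> scalar_field b with
  | true => fun r => (r, 0)
  | false => fun r => r
  end.

Lemma kit_add00 k : sadd (scalar_field k) (s0 _) (s0 _) = s0 (scalar_field k).
Proof. destruct k; simpl; [f_equal|]; ring. Qed.
Lemma kit_1m1 k : sadd (scalar_field k) (s1 _) (sopp _ (s1 _)) = s0 (scalar_field k).
Proof. destruct k; simpl; [f_equal|]; ring. Qed.
Lemma kit_comm k (a b : scalar_field k) : smul _ a b = smul _ b a.
Proof. destruct k; simpl in *; [destruct a, b; simpl; f_equal|]; ring. Qed.
Lemma kit_abs0 k : sabs (scalar_field k) (s0 _) = 0.
Proof. destruct k; simpl. - match goal with |- sqrt ?a = 0 => replace a with 0 by ring end; apply sqrt_0. - apply Rabs_R0. Qed.
Lemma kit_inv k (a : scalar_field k) : a <> s0 _ -> exists ai, smul _ ai a = s1 _.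
Proof.
destruct k; simpl in *.
- destruct a as [x y]. intro H. assert (x * x + y * y <> 0).
  { intro E. apply H. assert (x = 0) by nra. assert (y = 0) by nra. subst; auto. }
  exists (x / (x*x+y*y), - y / (x*x+y*y)). simpl. f_equal; field; auto.
- intro H. exists (/ a). field. auto.
Qed.
Lemma kit_absmul k (a b : scalar_field k) : sabs _ (smul _ a b) = sabs _ a * sabs _ b.
Proof.
destruct k; simpl in *.
- destruct a as [x y], b as [u w]. simpl. rewrite <- sqrt_mult by nra. f_equal. ring.
- apply Rabs_mult.
Qed.
Lemma kit_absemb k r : sabs _ (emb k r) = Rabs r.
Proof.
destruct k; simpl.
- match goal with |- sqrt ?a = _ => replace a with (Rsqr r) by (unfold Rsqr; ring) end. apply sqrt_Rsqr_abs.
- auto.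
Qed.
Lemma kit_emb1 k : emb k 1 = s1 (scalar_field k).
Proof. destruct k; reflexivity. Qed.
Lemma kit_absnn k (a : scalar_field k) : 0 <= sabs _ a.
Proof. destruct k; simpl. - apply sqrt_pos. - apply Rabs_pos. Qed.

Section BF.
Context {K : Scal} (X : Banach K).
Hypothesis S1 : sadd K (s0 K) (s0 K) = s0 K.
Hypothesis S2 : sadd K (s1 K) (sopp K (s1 K)) = s0 K.
Hypothesis S4 : sabs K (s0 K) = 0.

Lemma b_add0l (x : X) : vadd (v0 X) x = x.
Proof. rewrite vadd_comm; apply vadd_0. Qed.
Lemma b_idem (u : X) : vadd u u = u -> u = v0 X.
Proof.
intro H. assert (E: vadd (vadd u u) (vopp u) = u) by (rewrite <- vadd_assoc, vadd_opp, vadd_0; auto).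
rewrite H, vadd_opp in E. auto.
Qed.
Lemma b_scal0 (x : X) : vscal (s0 K) x = v0 X.
Proof. apply b_idem. rewrite <- vscal_distr_s, S1; auto. Qed.
Lemma b_scalv0 a : vscal a (v0 X) = v0 X.
Proof. apply b_idem. rewrite <- vscal_distr_v, vadd_0; auto. Qed.
Lemma b_opp_uniq (x w : X) : vadd x w = v0 X -> w = vopp x.
Proof.
intro H. rewrite <- (vadd_0 _ w), <- (vadd_opp _ x), vadd_assoc, (vadd_comm _ w x), H, b_add0l. auto.
Qed.
Lemma b_opp_scal (x : X) : vopp x = vscal (sopp K (s1 K)) x.
Proof.
symmetry. apply b_opp_uniq. rewrite <- (vscal_1 _ x) at 1. rewrite <- vscal_distr_s, S2. apply b_scal0.
Qed.
Lemma b_nrm0 : vnorm (v0 X) = 0.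
Proof. rewrite <- (b_scal0 (v0 X)), vnorm_scal, S4. ring. Qed.
End BF.
Lemma kit_absm1 k : sabs (scalar_field k) (sopp _ (s1 _)) = 1.
Proof.
destruct k; simpl.
- match goal with |- sqrt ?a = 1 => replace a with 1 by ring end; apply sqrt_1.
- rewrite Rabs_Ropp. apply Rabs_R1.
Qed.

Lemma sqrt_le_sum u w : sqrt (u * (u * 1) + w * (w * 1)) <= Rabs u + Rabs w.
Proof.
rewrite <- (sqrt_pow2 (Rabs u + Rabs w)) by (apply Rplus_le_le_0_compat; apply Rabs_pos).
apply sqrt_le_1_alt.
assert (0 <= Rabs u * Rabs w) by (apply Rmult_le_pos; apply Rabs_pos).
replace (u * (u*1) + w * (w*1)) with (Rabs u * Rabs u + Rabs w * Rabs w).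
- simpl. nra.
- rewrite <- !Rabs_mult. rewrite !Rabs_right by nra. ring.
Qed.

Lemma exists_functional_false (X : Banach (scalar_field false)) (v : X) :
  v <> v0 X -> exists phi : X -> scalar_field false,
   linear_fun phi /\ continuous_fun phi /\ 0 < sabs _ (phi v).
Proof.
intro nv.
destruct (@hahn_banach_real X (v0 X) (@vadd _ X) (@vopp _ X) (@vscal _ X) (@vnorm _ X)
  (vadd_assoc X) (vadd_comm X) (vadd_0 X) (vadd_opp X) (vscal_1 X) (vscal_assoc X)
  (vscal_distr_v X) (vscal_distr_s X) (vnorm_scal X) (vnorm_triangle X) (vnorm_nonneg X) v)
  as [f [fa [fs [fb fv]]]].
exists f. split; [split|split].
- exact fa.
- exact fs.
- intros x eps Heps. exists eps. split; auto. intros y Hy. simpl.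
  assert (E : f y + - f x = f (vsub y x)).
  { unfold vsub. rewrite fa, (b_opp_scal X (kit_add00 false) (kit_1m1 false)). rewrite fs. simpl. ring. }
  rewrite E. eapply Rle_lt_trans; [apply fb|]. auto.
- simpl. rewrite fv. assert (0 <= vnorm v) by apply vnorm_nonneg.
  destruct H; [rewrite Rabs_right; lra|]. exfalso. apply nv, vnorm_eq0. auto.
Qed.

Lemma exists_functional_true (X : Banach (scalar_field true)) (v : X) :
  v <> v0 X -> exists phi : X -> scalar_field true,
   linear_fun phi /\ continuous_fun phi /\ 0 < sabs _ (phi v).
Proof.
intro nv.
set (sc := fun (r : R) (x : X) => vscal ((r, 0) : scalar_field true) x).
assert (A1 : forall x, sc 1 x = x) by (intro; apply vscal_1).
assert (A2 : forall a b x, sc a (sc b x) = sc (a * b) x).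
{ intros. unfold sc. rewrite vscal_assoc. f_equal. simpl. f_equal; ring. }
assert (A3 : forall a x y, sc a (vadd x y) = vadd (sc a x) (sc a y)) by (intros; apply vscal_distr_v).
assert (A4 : forall a b x, sc (a + b) x = vadd (sc a x) (sc b x)).
{ intros. unfold sc. rewrite <- vscal_distr_s. f_equal. simpl. f_equal; ring. }
assert (A5 : forall a x, vnorm (sc a x) = Rabs a * vnorm x).
{ intros. unfold sc. rewrite vnorm_scal. f_equal. apply (kit_absemb true). }
destruct (@hahn_banach_real X (v0 X) (@vadd _ X) (@vopp _ X) sc (@vnorm _ X)
  (vadd_assoc X) (vadd_comm X) (vadd_0 X) (vadd_opp X) A1 A2 A3 A4 A5
  (vnorm_triangle X) (vnorm_nonneg X) v)
  as [f [fa [fs [fb fv]]]].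
set (iu := ((0, 1) : scalar_field true)).
assert (dec : forall (a b : R) (x : X), vscal ((a, b) : scalar_field true) x = vadd (sc a x) (sc b (vscal iu x))).
{ intros. unfold sc, iu. rewrite vscal_assoc, <- vscal_distr_s. f_equal. simpl. f_equal; ring. }
assert (iopp : forall x, vopp x = sc (-1) x).
{ intro x. rewrite (b_opp_scal X (kit_add00 true) (kit_1m1 true)). unfold sc. f_equal. simpl. f_equal; ring. }
exists (fun x => (f x, - f (vscal iu x))). split; [split|split].
- intros x y. simpl. rewrite vscal_distr_v, !fa. f_equal. ring.
- intros [a b] x. cbv beta.
  assert (E : vscal iu (vscal ((a, b) : scalar_field true) x) = vadd (sc (- b) x) (sc a (vscal iu x))).
  { unfold sc, iu. rewrite !vscal_assoc. rewrite <- (vscal_distr_s X (- b, 0)). f_equal. simpl. f_equal; ring. }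
  rewrite E, dec, !fa, !fs. simpl. f_equal; ring.
- intros x eps Heps. exists (eps / 2). split; [lra|]. intros y Hy. simpl.
  set (d := vsub y x).
  assert (E1 : f y + - f x = f d).
  { unfold d, vsub. rewrite fa, iopp, fs. ring. }
  assert (E2 : - f (vscal iu y) + - - f (vscal iu x) = - f (vscal iu d)).
  { unfold d, vsub. rewrite vscal_distr_v, fa, iopp. unfold sc.
    rewrite (vscal_assoc X iu), (kit_comm true iu), <- vscal_assoc. fold (sc (-1) (vscal iu x)). rewrite fs. ring. }
  simpl in E2. rewrite E1, E2.
  eapply Rle_lt_trans; [apply sqrt_le_sum|].
  rewrite Rabs_Ropp.
  assert (B1 := fb d). assert (B2 := fb (vscal iu d)).
  rewrite vnorm_scal in B2.
  assert (sabs _ iu = 1).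
  { unfold iu. simpl. match goal with |- sqrt ?a = 1 => replace a with 1 by ring end; apply sqrt_1. }
  rewrite H in B2. assert (Hd : vnorm d < eps / 2) by exact Hy.
  assert (Hfin : Rabs (f d) + Rabs (f (vscal iu d)) < eps) by lra. exact Hfin.
- simpl. rewrite fv.
  assert (0 <= vnorm v) by apply vnorm_nonneg.
  destruct H. 
  + apply sqrt_lt_R0. nra.
  + exfalso. apply nv, vnorm_eq0. auto.
Qed.

Lemma exists_functional (k : bool) (X : Banach (scalar_field k)) (v : X) :
  v <> v0 X -> exists phi : X -> scalar_field k,
   linear_fun phi /\ continuous_fun phi /\ 0 < sabs _ (phi v).
Proof.
destruct k; [apply exists_functional_true | apply exists_functional_false].
Qed.

Lemma Rpower_pos' x y : 0 < Rpower x y.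
Proof. unfold Rpower. apply exp_pos. Qed.

Lemma Rpower_1base y : Rpower 1 y = 1.
Proof. unfold Rpower. rewrite ln_1, Rmult_0_r. apply exp_0. Qed.

Lemma rpow_nonneg x q : 0 <= rpow x q.
Proof. unfold rpow. destruct (Rlt_dec 0 x); [left; apply Rpower_pos'|lra]. Qed.

Lemma rpow_pos x q : 0 < x -> rpow x q = Rpower x q.
Proof. intro H. unfold rpow. destruct (Rlt_dec 0 x); [auto|lra]. Qed.

Lemma rpow_0 q : rpow 0 q = 0.
Proof. unfold rpow. destruct (Rlt_dec 0 0); [lra|auto]. Qed.

Lemma rpow_le a b q : 0 < q -> 0 <= a <= b -> rpow a q <= rpow b q.
Proof.
intros Hq [Ha Hb]. destruct Ha as [Ha|Ha].
- rewrite !rpow_pos by lra. apply Rle_Rpower_l; lra.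
- subst. rewrite rpow_0. apply rpow_nonneg.
Qed.

Lemma rpow_le_inv a b q : 0 < q -> 0 <= a -> 0 < b -> rpow a q <= rpow b q -> a <= b.
Proof.
intros Hq Ha Hb H. destruct (Rle_lt_dec a b); auto.
rewrite !rpow_pos in H by lra. assert (Rpower b q < Rpower a q) by (apply Rlt_Rpower_l; lra). lra.
Qed.

Lemma rpow_mul a b q : 0 <= a -> 0 <= b -> rpow (a * b) q = rpow a q * rpow b q.
Proof.
intros [Ha|Ha] [Hb|Hb].
- rewrite !rpow_pos by nra. symmetry. apply Rpower_mult_distr; auto.
- subst. rewrite Rmult_0_r, rpow_0. ring.
- subst. rewrite Rmult_0_l, rpow_0. ring.
- subst. rewrite Rmult_0_l, rpow_0. ring.
Qed.

Lemma rpow_add a b q : 0 < q -> 0 <= a -> 0 <= b ->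
  rpow (a + b) q <= Rpower 2 q * (rpow a q + rpow b q).
Proof.
intros Hq Ha Hb.
assert (H2 : rpow 2 q = Rpower 2 q) by (apply rpow_pos; lra).
assert (P2 : 0 < Rpower 2 q) by apply Rpower_pos'.
assert (na := rpow_nonneg a q). assert (nb := rpow_nonneg b q).
destruct (Rle_dec a b).
- apply Rle_trans with (rpow (2 * b) q).
  + apply rpow_le; lra.
  + rewrite rpow_mul, H2 by lra. nra.
- apply Rle_trans with (rpow (2 * a) q).
  + apply rpow_le; lra.
  + rewrite rpow_mul, H2 by lra. nra.
Qed.

Lemma psum_nonneg f N : (forall i, 0 <= f i) -> 0 <= psum f N.
Proof. intro H. induction N; simpl; [lra|]. specialize (H N). lra. Qed.

Lemma psum_le f g N : (forall i, (i < N)%nat -> f i <= g i) -> psum f N <= psum g N.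
Proof.
intro H. induction N; simpl; [lra|].
assert (f N <= g N) by (apply H; lia).
assert (psum f N <= psum g N) by (apply IHN; intros; apply H; lia). lra.
Qed.

Lemma psum_ext f g N : (forall i, (i < N)%nat -> f i = g i) -> psum f N = psum g N.
Proof.
intro H. induction N; simpl; auto.
rewrite IHN; [rewrite H; auto|intros; apply H]; lia.
Qed.

Lemma psum_scal c f N : psum (fun i => c * f i) N = c * psum f N.
Proof. induction N; simpl; [ring|]. rewrite IHN. ring. Qed.

Lemma psum_plus f g N : psum (fun i => f i + g i) N = psum f N + psum g N.
Proof. induction N; simpl; [ring|]. rewrite IHN. ring. Qed.

Lemma psum_add f a b : psum f (a + b) = psum f a + psum (fun i => f (a + i)%nat) b.
Proof.
induction b; simpl.
- rewrite Nat.add_0_r. ring.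
- rewrite Nat.add_succ_r. simpl. rewrite IHb. ring.
Qed.

Lemma psum_mono f a b : (forall i, 0 <= f i) -> (a <= b)%nat -> psum f a <= psum f b.
Proof.
intros H Hab. replace b with (a + (b - a))%nat by lia. rewrite psum_add.
assert (0 <= psum (fun i => f (a + i)%nat) (b - a)) by (apply psum_nonneg; auto). lra.
Qed.

Lemma psum_term f j N : (forall i, 0 <= f i) -> (j < N)%nat -> f j <= psum f N.
Proof.
intros H Hj. apply Rle_trans with (psum f (S j)).
- simpl. assert (0 <= psum f j) by (apply psum_nonneg; auto). lra.
- apply psum_mono; auto.
Qed.

Lemma psum_zero_at f j M : (j < M)%nat ->
  psum (fun i => if Nat.eq_dec i j then 0 else f i) M = psum f M - f j.
Proof.
induction M; intro H; [lia|]. simpl.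
destruct (Nat.eq_dec M j).
- subst. rewrite (psum_ext _ f). + ring.
  + intros i Hi. destruct (Nat.eq_dec i j); [lia|auto].
- rewrite IHM by lia. ring.
Qed.

Lemma psum_inj N : forall (f : nat -> R) (h : nat -> nat) M, (forall i, 0 <= f i) ->
  (forall i, (i < N)%nat -> (h i < M)%nat) ->
  (forall i j, (i < N)%nat -> (j < N)%nat -> h i = h j -> i = j) ->
  psum (fun i => f (h i)) N <= psum f M.
Proof.
induction N; intros f h M Hf Hb Hi; simpl.
- apply psum_nonneg; auto.
- set (f' := fun i => if Nat.eq_dec i (h N) then 0 else f i).
  assert (E : psum (fun i => f (h i)) N = psum (fun i => f' (h i)) N).
  { apply psum_ext. intros i Hi'. unfold f'. destruct (Nat.eq_dec (h i) (h N)); auto.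
    assert (i = N) by (apply Hi; auto; lia). lia. }
  assert (I := IHN f' h M).
  assert (Z := psum_zero_at f (h N) M (Hb N (Nat.lt_succ_diag_r N))).
  fold f' in Z. rewrite E.
  assert (psum (fun i => f' (h i)) N <= psum f' M).
  { apply I. - intro i. unfold f'. destruct (Nat.eq_dec i (h N)); [lra|auto].
    - intros; apply Hb; lia. - intros; apply Hi; lia || auto. }
  lra.
Qed.

Lemma psum_box (f g : nat -> R) N A : (N > 0)%nat ->
  psum (fun j => f (j / N)%nat * g (j mod N)%nat) (A * N) = psum f A * psum g N.
Proof.
intro HN. induction A.
- simpl. ring.
- replace (S A * N)%nat with (A * N + N)%nat by lia. rewrite psum_add, IHA. simpl psum.
  rewrite (psum_ext (fun i => f ((A * N + i) / N)%nat * g ((A * N + i) mod N)) (fun i => f A * g i) N).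
  + rewrite (psum_scal (f A) g N). ring.
  + intros i Hi. f_equal; f_equal.
    * symmetry. apply Nat.div_unique with i; lia.
    * symmetry. apply Nat.mod_unique with A; lia.
Qed.

Lemma bound_fin (h : nat -> nat) N : exists M, forall i, (i < N)%nat -> (h i < M)%nat.
Proof.
induction N.
- exists O. intros; lia.
- destruct IHN as [M HM]. exists (Nat.max M (S (h N))). intros i Hi.
  destruct (Nat.eq_dec i N). + subst. lia. + specialize (HM i). lia.
Qed.

Lemma ln_div x y : 0 < x -> 0 < y -> ln (x / y) = ln x - ln y.
Proof.
intros Hx Hy. unfold Rdiv. rewrite ln_mult, ln_Rinv; try ring; auto. apply Rinv_0_lt_compat; auto.
Qed.
Lemma ln_le_sub1 y : 0 < y -> ln y <= y - 1.
Proof. intro H. assert (E := exp_ineq1_le (ln y)). rewrite exp_ln in E by auto. lra. Qed.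

Lemma key_ineq x t : 1 <= x -> 0 < t ->
  Rpower (x + 1) (- (t + 1)) <= (Rpower x (- t) - Rpower (x + 1) (- t)) / t.
Proof.
intros Hx Ht. unfold Rpower.
set (A := ln x). set (B := ln (x + 1)).
assert (BA : / (x + 1) <= B - A).
{ unfold A, B. assert (L := ln_le_sub1 (x / (x + 1))).
  rewrite ln_div in L by lra. 
  assert (x / (x+1) - 1 = - / (x + 1)) by (field; lra). assert (0 < x / (x + 1)) by (apply Rdiv_lt_0_compat; lra). specialize (L H0). lra. }
assert (E1 : exp (- t * A) = exp (- t * B) * exp (t * (B - A))).
{ rewrite <- exp_plus. f_equal. ring. }
assert (E2 : exp (- (t + 1) * B) = exp (- t * B) * / (x + 1)).
{ replace (- (t + 1) * B) with (- t * B + - B) by ring. rewrite exp_plus. f_equal.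
  unfold B. rewrite exp_Ropp, exp_ln; lra. }
rewrite E1, E2.
assert (Ex := exp_ineq1_le (t * (B - A))).
assert (P := exp_pos (- t * B)).
apply Rmult_le_reg_l with t; auto.
replace (t * ((exp (- t * B) * exp (t * (B - A)) - exp (- t * B)) / t)) with
  (exp (- t * B) * (exp (t * (B - A)) - 1)) by (field; lra).
apply Rle_trans with (exp (- t * B) * (t * (B - A))).
- replace (t * (exp (- t * B) * / (x + 1))) with (exp (- t * B) * (t * / (x+1))) by ring.
  apply Rmult_le_compat_l; [lra|]. apply Rmult_le_compat_l; lra.
- apply Rmult_le_compat_l; lra.
Qed.

Lemma zeta_bound s : 1 < s -> forall N,
  psum (fun m => Rpower (INR m + 1) (- s)) N <= 1 + / (s - 1).
Proof.
intros Hs.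
set (t := s - 1). assert (Ht : 0 < t) by (unfold t; lra).
assert (strong : forall N, (1 <= N)%nat ->
  psum (fun m => Rpower (INR m + 1) (- s)) N <= 1 + (1 - Rpower (INR N) (- t)) / t).
{ intros N HN. induction N; [lia|].
  destruct (Nat.eq_dec N 0).
  - subst. simpl. replace (0 + 1) with 1 by ring. rewrite !Rpower_1base.
    replace ((1 - 1) / t) with 0 by (unfold Rdiv; ring). lra.
  - assert (IH := IHN ltac:(lia)). simpl psum.
    assert (Hx : 1 <= INR N) by (apply (le_INR 1); lia).
    assert (K := key_ineq (INR N) t Hx Ht).
    replace (- (t + 1)) with (- s) in K by (unfold t; ring).
    rewrite S_INR.
    assert (E : 1 + (1 - Rpower (INR N) (- t)) / t + (Rpower (INR N) (- t) - Rpower (INR N + 1) (- t)) / t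
              = 1 + (1 - Rpower (INR N + 1) (- t)) / t) by (field; lra).
    lra. }
intro N. destruct N.
- simpl psum. assert (0 < / t) by (apply Rinv_0_lt_compat; lra). lra.
- assert (H := strong (S N) ltac:(lia)).
  assert (P := Rpower_pos' (INR (S N)) (- t)).
  assert (E : (1 - Rpower (INR (S N)) (- t)) / t <= / t).
  { unfold Rdiv. rewrite <- (Rmult_1_l (/ t)) at 2. apply Rmult_le_compat_r. - left. apply Rinv_0_lt_compat; lra. - lra. }
  lra.
Qed.

Lemma harmonic_ln N : ln (INR N + 1) <= psum (fun m => / (INR m + 1)) N.
Proof.
induction N.
- simpl. rewrite Rplus_0_l, ln_1. lra.
- simpl psum. rewrite S_INR.
  assert (P : 0 < INR N + 1) by (assert (0 <= INR N) by apply pos_INR; lra).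
  assert (L := ln_le_sub1 ((INR N + 1 + 1) / (INR N + 1))).
  rewrite ln_div in L by lra.
  assert ((INR N + 1 + 1) / (INR N + 1) - 1 = / (INR N + 1)) by (field; lra).
  assert (0 < (INR N + 1 + 1) / (INR N + 1)) by (apply Rdiv_lt_0_compat; lra).
  specialize (L H0). lra.
Qed.

Lemma harmonic_unbounded c M : 0 < c -> exists N, M < c * psum (fun m => / (INR m + 1)) N.
Proof.
intro Hc.
destruct (INR_archimed 1 (exp (M / c)) ltac:(lra)) as [N HN].
exists N. assert (H := harmonic_ln N).
assert (M / c < ln (INR N + 1)).
{ rewrite <- (ln_exp (M / c)). apply ln_increasing; [apply exp_pos|]. lra. }
apply Rmult_lt_compat_l with (r := c) in H0; auto.
replace (c * (M / c)) with M in H0 by (field; lra). nra.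
Qed.

Definition cr (p : R) (m : nat) : R := Rpower (INR m + 1) (- / p).

Lemma cr_pos p m : 0 < cr p m.
Proof. apply Rpower_pos'. Qed.
Lemma cr_0 p : cr p 0 = 1.
Proof. unfold cr. simpl. rewrite Rplus_0_l. apply Rpower_1base. Qed.
Lemma cr_le1 p m : 0 < p -> cr p m <= 1.
Proof.
intro Hp. unfold cr. assert (0 <= INR m) by apply pos_INR.
apply Rle_trans with (Rpower (INR m + 1) 0); [|rewrite Rpower_O; lra].
apply Rle_Rpower. - assert (0 <= INR m) by apply pos_INR; lra.
- assert (0 < / p) by (apply Rinv_0_lt_compat; lra). lra.
Qed.
Lemma cr_rpow p q m : 0 < p -> rpow (cr p m) q = Rpower (INR m + 1) (- (q / p)).
Proof.
intro Hp. rewrite rpow_pos by apply cr_pos. unfold cr. rewrite Rpower_mult. f_equal. field. lra.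
Qed.
Lemma cr_rpow_p p m : 0 < p -> rpow (cr p m) p = / (INR m + 1).
Proof.
intro Hp. rewrite cr_rpow by auto. assert (E : p / p = 1) by (field; lra). rewrite E.
rewrite Rpower_Ropp, Rpower_1; auto. assert (0 <= INR m) by apply pos_INR; lra.
Qed.
Lemma cr_sum p q : 0 < p -> p < q -> forall N, psum (fun m => rpow (cr p m) q) N <= 1 + / (q / p - 1).
Proof.
intros Hp Hq N. rewrite (psum_ext _ (fun m => Rpower (INR m + 1) (- (q / p)))).
- apply zeta_bound. apply Rmult_lt_reg_r with p; auto. unfold Rdiv. rewrite Rmult_assoc, Rinv_l; lra.
- intros. apply cr_rpow; auto.
Qed.

Lemma of_bound j : (fst (Cantor.of_nat j) <= j)%nat /\ (snd (Cantor.of_nat j) <= j)%nat.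
Proof.
assert (H := Cantor.to_nat_non_decreasing (fst (Cantor.of_nat j)) (snd (Cantor.of_nat j))).
rewrite <- surjective_pairing, Cantor.cancel_to_of in H. lia.
Qed.

Lemma to_inj a b : Cantor.to_nat a = Cantor.to_nat b -> a = b.
Proof. intro H. rewrite <- (Cantor.cancel_of_to a), <- (Cantor.cancel_of_to b), H. auto. Qed.

Lemma of_inj i j : Cantor.of_nat i = Cantor.of_nat j -> i = j.
Proof. intro H. rewrite <- (Cantor.cancel_to_of i), <- (Cantor.cancel_to_of j), H. auto. Qed.

Section Main.
Variable k : bool.
Variable X : Banach (scalar_field k).
Variable p : R.
Hypothesis Hp : 0 < p.

Let S1 := kit_add00 k.
Let S2 := kit_1m1 k.
Let S4 := kit_abs0 k.

Lemma m_opp_add (x y : X) : vopp (vadd x y) = vadd (vopp x) (vopp y).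
Proof.
symmetry. apply (b_opp_uniq X).
rewrite (vadd_assoc X (vadd x y) (vopp x) (vopp y)).
rewrite <- (vadd_assoc X x y (vopp x)). rewrite (vadd_comm X y (vopp x)).
rewrite (vadd_assoc X x (vopp x) y), vadd_opp, (b_add0l X). apply vadd_opp.
Qed.

Lemma m_opp_opp (x : X) : vopp (vopp x) = x.
Proof. symmetry. apply (b_opp_uniq X). rewrite vadd_comm. apply vadd_opp. Qed.

Lemma m_scal_opp c (x : X) : vscal c (vopp x) = vopp (vscal c x).
Proof.
rewrite !(b_opp_scal X S1 S2), !vscal_assoc. f_equal. apply kit_comm.
Qed.

Lemma m_cancel (U a B : X) : vadd (vadd (vopp U) a) (vadd U B) = vadd a B.
Proof.
rewrite (vadd_comm _ (vopp U) a), <- vadd_assoc, (vadd_assoc _ (vopp U) U B),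
  (vadd_comm _ (vopp U) U), vadd_opp, (b_add0l X). auto.
Qed.

Lemma m_nrm_opp (x : X) : vnorm (vopp x) = vnorm x.
Proof. rewrite (b_opp_scal X S1 S2), vnorm_scal, kit_absm1. ring. Qed.

Lemma m_sub0 (a b : X) : vnorm (vsub a b) = 0 -> a = b.
Proof.
intro H. apply vnorm_eq0 in H. unfold vsub in H.
assert (E : vopp b = vopp a) by (apply (b_opp_uniq X); auto).
rewrite <- (m_opp_opp a), <- E, m_opp_opp. auto.
Qed.

Lemma lin_comb_vscal {A : Type} c (l : list A) (u : A -> scalar_field k) (w : A -> X) :
  vscal c (lin_comb (map (fun z => (u z, w z)) l)) = lin_comb (map (fun z => (u z, vscal c (w z))) l).
Proof.
induction l; simpl.
- apply (b_scalv0 X).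
- rewrite vscal_distr_v, IHl, !vscal_assoc, kit_comm. auto.
Qed.

Lemma lin_comb_scale {A : Type} c (l : list A) (u : A -> scalar_field k) (w : A -> X) :
  lin_comb (map (fun z => (smul _ c (u z), w z)) l) = vscal c (lin_comb (map (fun z => (u z, w z)) l)).
Proof.
induction l; simpl.
- symmetry. apply (b_scalv0 X).
- rewrite vscal_distr_v, IHl, !vscal_assoc. auto.
Qed.

Lemma lin_comb_app (A B : list (scalar_field k * X)) :
  lin_comb (A ++ B) = vadd (lin_comb A) (lin_comb B).
Proof.
induction A; simpl.
- symmetry. apply (b_add0l X).
- rewrite IHA. apply vadd_assoc.
Qed.

Definition Tm (x : nat -> X) : nat -> X :=
  fun j => vscal (emb k (cr p (snd (Cantor.of_nat j)))) (x (fst (Cantor.of_nat j))).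
Definition Sm (y : nat -> X) : nat -> X := fun n => y (Cantor.to_nat (n, 0%nat)).

Lemma Tm_at x n m : Tm x (Cantor.to_nat (n, m)) = vscal (emb k (cr p m)) (x n).
Proof. unfold Tm. rewrite Cantor.cancel_of_to. auto. Qed.

Lemma SmTm x : Sm (Tm x) = x.
Proof.
apply functional_extensionality. intro n. unfold Sm. rewrite Tm_at, cr_0, kit_emb1. apply vscal_1.
Qed.

Lemma Tm_zero : Tm zero_seq = zero_seq.
Proof. apply functional_extensionality. intro j. unfold Tm, zero_seq. apply (b_scalv0 X). Qed.

Lemma Tm_add x y : Tm (add_seq x y) = add_seq (Tm x) (Tm y).
Proof. apply functional_extensionality. intro j. unfold Tm, add_seq. apply vscal_distr_v. Qed.

Lemma Tm_scal a x : Tm (scal_seq a x) = scal_seq a (Tm x).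
Proof.
apply functional_extensionality. intro j. unfold Tm, scal_seq. rewrite !vscal_assoc, kit_comm. auto.
Qed.

Lemma Tm_lin_comb l : Tm (seq_lin_comb l) = seq_lin_comb (map (fun pr => (fst pr, Tm (snd pr))) l).
Proof.
apply functional_extensionality. intro j. unfold Tm at 1, seq_lin_comb. rewrite map_map.
rewrite lin_comb_vscal. simpl. reflexivity.
Qed.

Lemma Sm_lin_comb l : Sm (seq_lin_comb l) = seq_lin_comb (map (fun pr => (fst pr, Sm (snd pr))) l).
Proof.
apply functional_extensionality. intro n. unfold Sm at 1, seq_lin_comb. rewrite map_map. reflexivity.
Qed.

Definition W (y : nat -> X) : Prop := exists x, lpplus p x /\ y = Tm x.

Lemma W_rel y n m : W y -> y (Cantor.to_nat (n, m)) = vscal (emb k (cr p m)) (y (Cantor.to_nat (n, 0%nat))).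
Proof.
intros [x [_ ->]]. rewrite !Tm_at, cr_0, kit_emb1, vscal_1. auto.
Qed.

Lemma lpplus_zero : @lpplus _ X p zero_seq.
Proof.
intros q Hq. exists 0. intro N. unfold zero_seq. rewrite (b_nrm0 X S1 S4), rpow_0.
induction N; simpl; lra.
Qed.

Lemma lpplus_add (x y : nat -> X) : lpplus p x -> lpplus p y -> lpplus p (add_seq x y).
Proof.
intros Hx Hy q Hq. destruct (Hx q Hq) as [Mx HMx]. destruct (Hy q Hq) as [My HMy].
exists (Rpower 2 q * (Mx + My)). intro N.
apply Rle_trans with (psum (fun n => Rpower 2 q * (rpow (vnorm (x n)) q + rpow (vnorm (y n)) q)) N).
- apply psum_le. intros i _. unfold add_seq.
  apply Rle_trans with (rpow (vnorm (x i) + vnorm (y i)) q).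
  + apply rpow_le; [lra|]. split; [apply vnorm_nonneg|apply vnorm_triangle].
  + apply rpow_add; [lra|apply vnorm_nonneg|apply vnorm_nonneg].
- rewrite psum_scal, psum_plus. apply Rmult_le_compat_l; [left; apply Rpower_pos'|].
  specialize (HMx N). specialize (HMy N). lra.
Qed.

Lemma lpplus_scal a (x : nat -> X) : lpplus p x -> lpplus p (scal_seq a x).
Proof.
intros Hx q Hq. destruct (Hx q Hq) as [Mx HMx].
exists (rpow (sabs _ a) q * Mx). intro N.
rewrite (psum_ext _ (fun n => rpow (sabs _ a) q * rpow (vnorm (x n)) q)).
- rewrite psum_scal. apply Rmult_le_compat_l; [apply rpow_nonneg|auto].
- intros i _. unfold scal_seq. rewrite vnorm_scal. apply rpow_mul; [apply kit_absnn|apply vnorm_nonneg].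
Qed.

Lemma lpplus_Sm (y : nat -> X) : lpplus p y -> lpplus p (Sm y).
Proof.
intros Hy q Hq. destruct (Hy q Hq) as [My HMy]. exists My. intro N.
destruct (bound_fin (fun n => Cantor.to_nat (n, 0%nat)) N) as [M HM].
apply Rle_trans with (psum (fun i => rpow (vnorm (y i)) q) M); [|apply HMy].
apply (psum_inj N (fun i => rpow (vnorm (y i)) q) (fun n => Cantor.to_nat (n, 0%nat)) M).
- intro; apply rpow_nonneg.
- auto.
- intros i j _ _ E. apply to_inj in E. injection E; auto.
Qed.

Lemma lpplus_Tm (x : nat -> X) : lpplus p x -> lpplus p (Tm x).
Proof.
intros Hx q Hq. destruct (Hx q Hq) as [Mx HMx].
set (f := fun n => rpow (vnorm (x n)) q).
set (g := fun m => rpow (cr p m) q).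
set (Mg := 1 + / (q / p - 1)).
assert (Hg : forall N, psum g N <= Mg) by (intro; apply cr_sum; lra).
assert (fnn : forall i, 0 <= f i) by (intro; apply rpow_nonneg).
assert (gnn : forall i, 0 <= g i) by (intro; apply rpow_nonneg).
assert (Mx0 : 0 <= Mx) by (apply Rle_trans with (psum f 0); [simpl; lra|apply HMx]).
assert (Mg0 : 0 <= Mg) by (apply Rle_trans with (psum g 0); [simpl; lra|apply Hg]).
exists (Mx * Mg). intro N.
destruct (Nat.eq_dec N 0) as [->|HN].
- simpl. nra.
- set (F := fun i => f (i / N)%nat * g (i mod N)%nat).
  set (h := fun j => (fst (Cantor.of_nat j) * N + snd (Cantor.of_nat j))%nat).
  assert (E : psum (fun j => rpow (vnorm (Tm x j)) q) N = psum (fun j => F (h j)) N).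
  { apply psum_ext. intros j Hj. destruct (of_bound j) as [b1 b2].
    unfold F, h, Tm. rewrite vnorm_scal, kit_absemb, Rabs_right by (left; apply cr_pos).
    rewrite rpow_mul by (apply vnorm_nonneg || (left; apply cr_pos)).
    assert (D : ((fst (Cantor.of_nat j) * N + snd (Cantor.of_nat j)) / N)%nat = fst (Cantor.of_nat j)).
    { symmetry. apply Nat.div_unique with (snd (Cantor.of_nat j)); lia. }
    assert (Mo : ((fst (Cantor.of_nat j) * N + snd (Cantor.of_nat j)) mod N)%nat = snd (Cantor.of_nat j)).
    { symmetry. apply Nat.mod_unique with (fst (Cantor.of_nat j)); lia. }
    rewrite D, Mo. unfold f, g. ring. }
  rewrite E.
  apply Rle_trans with (psum F (N * N)).
  + apply psum_inj.
    * intro i. unfold F. apply Rmult_le_pos; auto.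
    * intros j Hj. destruct (of_bound j) as [b1 b2]. unfold h. nia.
    * intros i j Hi Hj Hij. destruct (of_bound i) as [b1 b2]. destruct (of_bound j) as [c1 c2].
      unfold h in Hij. apply of_inj.
      rewrite (surjective_pairing (Cantor.of_nat i)), (surjective_pairing (Cantor.of_nat j)).
      assert (fst (Cantor.of_nat i) = fst (Cantor.of_nat j)).
      { assert (Q1 : fst (Cantor.of_nat i) = ((fst (Cantor.of_nat i) * N + snd (Cantor.of_nat i)) / N)%nat)
          by (apply Nat.div_unique with (snd (Cantor.of_nat i)); lia).
        assert (Q2 : fst (Cantor.of_nat j) = ((fst (Cantor.of_nat j) * N + snd (Cantor.of_nat j)) / N)%nat)
          by (apply Nat.div_unique with (snd (Cantor.of_nat j)); lia).
        rewrite Hij in Q1. lia. }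
      assert (snd (Cantor.of_nat i) = snd (Cantor.of_nat j)) by nia.
      f_equal; auto.
  + unfold F. rewrite psum_box by lia. fold f g.
    apply Rmult_le_compat; try apply psum_nonneg; auto.
Qed.

Lemma W_lpplus (y : nat -> X) : W y -> lpplus p y.
Proof. intros [x [Hx ->]]. apply lpplus_Tm; auto. Qed.

Lemma W_subspace : subspace W.
Proof.
split; [|split].
- exists zero_seq. split; [apply lpplus_zero|]. symmetry; apply Tm_zero.
- intros x y [x' [Hx ->]] [y' [Hy ->]]. exists (add_seq x' y'). split.
  + apply lpplus_add; auto.
  + symmetry; apply Tm_add.
- intros a x [x' [Hx ->]]. exists (scal_seq a x'). split.
  + apply lpplus_scal; auto.
  + symmetry; apply Tm_scal.
Qed.

Lemma W_char (y : nat -> X) : lpplus p y ->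
  (forall n m, y (Cantor.to_nat (n, m)) = vscal (emb k (cr p m)) (y (Cantor.to_nat (n, 0%nat)))) -> W y.
Proof.
intros Hy H. exists (Sm y). split; [apply lpplus_Sm; auto|].
apply functional_extensionality. intro j.
rewrite <- (Cantor.cancel_to_of j) at 1. rewrite (surjective_pairing (Cantor.of_nat j)).
rewrite H. unfold Tm, Sm. auto.
Qed.

Lemma W_closed : lpplus_closed p W.
Proof.
split; [exact W_lpplus|]. split; [intros x [Hx _]; auto|].
intros x [Hx nW].
assert (ex : exists n m, x (Cantor.to_nat (n, m)) <> vscal (emb k (cr p m)) (x (Cantor.to_nat (n, 0%nat)))).
{ apply NNPP; intro H. apply nW. apply W_char; auto. intros n m. apply NNPP; intro H'. apply H. exists n, m. auto. }
destruct ex as [n [m Hne]].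
set (k1 := Cantor.to_nat (n, m)) in *. set (k0 := Cantor.to_nat (n, 0%nat)) in *.
set (c := emb k (cr p m)) in *.
set (d := vnorm (vsub (x k1) (vscal c (x k0)))).
assert (dpos : 0 < d).
{ destruct (vnorm_nonneg _ (vsub (x k1) (vscal c (x k0)))) as [H|H]; auto.
  exfalso. apply Hne. apply m_sub0. auto. }
set (dl := d / 3). set (q0 := p + 1).
exists (q0 :: nil), (Rpower dl q0). split; [constructor; [unfold q0; lra|constructor]|].
split; [apply Rpower_pos'|].
intros y Hy HF. apply Forall_inv in HF.
assert (close : forall j, vnorm (vsub (y j) (x j)) <= dl).
{ intro j. apply rpow_le_inv with q0; [unfold q0; lra|apply vnorm_nonneg|unfold dl; lra|].
  rewrite (rpow_pos dl) by (unfold dl; lra).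
  eapply Rle_trans; [|apply (HF (S j))].
  apply (psum_term (fun j => rpow (vnorm (vsub (y j) (x j))) q0) j (S j)); [intro; apply rpow_nonneg|lia]. }
split; auto. intro Wy.
assert (R := W_rel y n m Wy). fold k1 k0 c in R.
assert (E : vsub (x k1) (vscal c (x k0)) = vadd (vopp (vsub (y k1) (x k1))) (vscal c (vsub (y k0) (x k0)))).
{ unfold vsub. rewrite R. rewrite m_opp_add, m_opp_opp, vscal_distr_v, m_scal_opp. symmetry. apply m_cancel. }
assert (Hd : d <= dl + 1 * dl).
{ unfold d. rewrite E. eapply Rle_trans; [apply vnorm_triangle|].
  rewrite m_nrm_opp, vnorm_scal. unfold c. rewrite kit_absemb, Rabs_right by (left; apply cr_pos).
  apply Rplus_le_compat; [apply close|].
  apply Rmult_le_compat; [left; apply cr_pos|apply vnorm_nonneg|apply cr_le1; auto|apply close]. }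
unfold dl in Hd. lra.
Qed.

Lemma Tm_not_ws (z : nat -> X) : z <> zero_seq -> ~ @weakly_summable _ X p (Tm z).
Proof.
intro nz. assert (ex : exists n, z n <> v0 X).
{ apply NNPP; intro H. apply nz. apply functional_extensionality. intro n.
  apply NNPP; intro H'. apply H; exists n; auto. }
destruct ex as [n Hn]. destruct (exists_functional k X (z n) Hn) as [phi [[la ls] [cont pos]]].
intro ws. destruct (ws phi (conj la ls) cont) as [Mb HMb].
set (a := sabs _ (phi (z n))) in *.
destruct (harmonic_unbounded (Rpower a p) Mb (Rpower_pos' _ _)) as [M HM].
destruct (bound_fin (fun m => Cantor.to_nat (n, m)) M) as [M' HM'].
assert (H : psum (fun m => rpow (sabs _ (phi (Tm z (Cantor.to_nat (n, m))))) p) M <= Mb).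
{ eapply Rle_trans; [|apply (HMb M')].
  apply (psum_inj M (fun j => rpow (sabs _ (phi (Tm z j))) p) (fun m => Cantor.to_nat (n, m)) M').
  - intro; apply rpow_nonneg.
  - auto.
  - intros i j _ _ E. apply to_inj in E. injection E; auto. }
rewrite (psum_ext _ (fun m => Rpower a p * / (INR m + 1))) in H.
- rewrite psum_scal in H. lra.
- intros m _. rewrite Tm_at, ls, kit_absmul, kit_absemb, Rabs_right by (left; apply cr_pos).
  fold a. rewrite rpow_mul by (lra || (left; apply cr_pos)).
  rewrite cr_rpow_p, (rpow_pos a) by auto. ring.
Qed.

Lemma chain_forall (F : ((nat -> X) -> Prop) -> Prop) (l : list (scalar_field k * (nat -> X))) :
  (forall A B, F A -> F B -> (forall z, A z -> B z) \/ (forall z, B z -> A z)) ->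
  Forall (fun pr => exists2 A, F A & A (snd pr)) l ->
  l = nil \/ exists A, F A /\ Forall (fun pr => A (snd pr)) l.
Proof.
intros Hc. induction l as [|a l IH]; intro Hf; [left; auto|right].
inversion Hf as [|? ? [A1 FA1 A1a] Hf']; subst.
destruct (IH Hf') as [->|[A [FA HA]]].
- exists A1. split; auto.
- destruct (Hc A1 A FA1 FA) as [s|s].
  + exists A. split; auto.
  + exists A1. split; auto. constructor; auto. eapply Forall_impl; [|exact HA]. intros pr Hpr; auto.
Qed.

Lemma hamel_exists (S : (nat -> X) -> Prop) : exists B, hamel_basis B S.
Proof.
set (PP := fun B : (nat -> X) -> Prop => (forall b, B b -> S b) /\ lin_indep B).
destruct (zorn_sets (nat -> X) PP) as [M [[MS Mli] Mmax]].
{ intros F HF Hc. split.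
  - intros b [A FA Ab]. apply (HF A FA); auto.
  - intros l nd fa comb.
    destruct (chain_forall F l Hc fa) as [->|[A [FA HA]]]; [constructor|].
    apply (proj2 (HF A FA)); auto. }
exists M. split; [|split]; auto.
intros s Ss. apply NNPP; intro nsp.
set (B' := fun b => M b \/ b = s).
assert (PB' : PP B').
{ split.
  - intros b [Mb| ->]; auto.
  - intros l nd fa comb. destruct (classic (In s (map snd l))) as [Hin|Hnin].
    + apply in_map_iff in Hin. destruct Hin as [[a s'] [Es Hpr]]. simpl in Es. subst s'.
      apply in_split in Hpr. destruct Hpr as [l1 [l2 ->]].
      rewrite map_app in nd. simpl in nd.
      assert (nd' := NoDup_remove_1 _ _ _ nd). assert (nin := NoDup_remove_2 _ _ _ nd).
      rewrite <- map_app in nd', nin.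
      apply Forall_app in fa. destruct fa as [fa1 fa2]. inversion fa2 as [|? ? _ fa2']; subst.
      assert (fa12 : Forall (fun pr => M (snd pr)) (l1 ++ l2)).
      { rewrite Forall_forall. intros pr Hpr.
        assert (HB : B' (snd pr)).
        { rewrite Forall_forall in fa1, fa2'. apply in_app_or in Hpr. destruct Hpr; auto. }
        destruct HB as [|E]; auto. exfalso. apply nin. rewrite <- E. apply in_map; auto. }
      assert (combp : forall j, vadd (vscal a (s j)) (lin_comb (map (fun pr => (fst pr, snd pr j)) (l1 ++ l2))) = v0 X).
      { intro j. assert (C := f_equal (fun f => f j) comb). unfold seq_lin_comb, zero_seq in C. simpl in C.
        rewrite map_app, lin_comb_app in C. simpl in C. rewrite map_app, lin_comb_app.
        rewrite <- C. rewrite !vadd_assoc. f_equal. apply vadd_comm. }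
      destruct (classic (a = s0 _)) as [a0|an0].
      * subst a. assert (comb12 : seq_lin_comb (l1 ++ l2) = zero_seq).
        { apply functional_extensionality; intro j. specialize (combp j).
          rewrite (b_scal0 X S1), (b_add0l X) in combp. exact combp. }
        assert (Z := Mli _ nd' fa12 comb12). apply Forall_app in Z. destruct Z.
        apply Forall_app. split; auto.
      * exfalso. apply nsp. destruct (kit_inv k a an0) as [ai Hai].
        set (c := smul _ ai (sopp _ (s1 (scalar_field k)))).
        exists (map (fun pr => (smul _ c (fst pr), snd pr)) (l1 ++ l2)). split.
        -- apply Forall_map. exact fa12.
        -- apply functional_extensionality; intro j. unfold seq_lin_comb. rewrite map_map. simpl.
           rewrite (lin_comb_scale c (l1 ++ l2) fst (fun pr => snd pr j)).
           specialize (combp j). set (L := lin_comb (map (fun pr => (fst pr, snd pr j)) (l1 ++ l2))) in *.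
           assert (E : vscal a (s j) = vopp L) by (apply (b_opp_uniq X); rewrite vadd_comm; auto).
           unfold c. rewrite <- vscal_assoc, <- (b_opp_scal X S1 S2), <- E, vscal_assoc, Hai, vscal_1. auto.
    + apply Mli; auto. rewrite Forall_forall in *. intros pr Hpr.
      destruct (fa pr Hpr) as [|E]; auto. exfalso. apply Hnin. rewrite <- E. apply in_map; auto. }
assert (Ms := Mmax B' (fun z Mz => or_introl Mz) PB' s (or_intror eq_refl)).
apply nsp. exists ((s1 (scalar_field k), s) :: nil). split.
- constructor; auto.
- apply functional_extensionality; intro j. unfold seq_lin_comb. simpl. rewrite vadd_0, vscal_1. auto.
Qed.

Lemma NoDup_map_inj {A B : Type} (f : A -> B) (l : list A) :
  (forall x y, In x l -> In y l -> f x = f y -> x = y) -> NoDup l -> NoDup (map f l).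
Proof.
induction l as [|a l IH]; intros Hi Hn; simpl; [constructor|].
inversion Hn; subst. constructor.
- intro Hin. apply in_map_iff in Hin. destruct Hin as [y [Ey Iy]].
  assert (y = a) by (apply Hi; simpl; auto). subst. contradiction.
- apply IH; auto. intros; apply Hi; simpl; auto.
Qed.

Theorem main_result :
  maximal_spaceable p (fun x : nat -> X => lpplus p x /\ ~ weakly_summable p x).
Proof.
exists W. split; [apply W_subspace|]. split; [apply W_closed|]. split.
- intros x Wx. destruct (classic (x = zero_seq)) as [H|H]; [right; auto|left].
  split; [apply W_lpplus; auto|]. destruct Wx as [z [Hz ->]]. apply Tm_not_ws.
  intro Ez. subst. apply H. apply Tm_zero.
- destruct (hamel_exists (lpplus p)) as [B0 [B0S [B0li B0sp]]].
  exists (fun y => exists b, B0 b /\ y = Tm b), B0, Sm. split; [|split; [|split; [|split]]].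
  + split; [|split].
    * intros y [b [Bb ->]]. exists b; split; auto.
    * intros l nd fa comb.
      set (l' := map (fun pr => (fst pr, Sm (snd pr))) l).
      assert (Z : Forall (fun pr => fst pr = s0 _) l').
      { apply B0li.
        - unfold l'. rewrite map_map. simpl.
          replace (map (fun x => Sm (snd x)) l) with (map Sm (map snd l)) by (rewrite map_map; auto).
          apply NoDup_map_inj; auto. intros y1 y2 I1 I2 E.
          rewrite Forall_forall in fa.
          apply in_map_iff in I1. destruct I1 as [pr1 [<- P1]].
          apply in_map_iff in I2. destruct I2 as [pr2 [<- P2]].
          destruct (fa pr1 P1) as [b1 [_ E1]]. destruct (fa pr2 P2) as [b2 [_ E2]].
          rewrite E1, E2 in *. rewrite !SmTm in E. subst. auto.
        - unfold l'. apply Forall_map. simpl. rewrite Forall_forall in *. intros pr Hpr.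
          destruct (fa pr Hpr) as [b [Bb E]]. rewrite E, SmTm. auto.
        - unfold l'. rewrite <- Sm_lin_comb, comb. apply functional_extensionality. intro; reflexivity. }
      unfold l' in Z. apply Forall_map in Z. simpl in Z. exact Z.
    * intros w [z [Hz ->]]. destruct (B0sp z Hz) as [l [fa ->]].
      exists (map (fun pr => (fst pr, Tm (snd pr))) l). split.
      -- apply Forall_map. rewrite Forall_forall in *. intros pr Hpr. exists (snd pr). simpl. auto.
      -- apply Tm_lin_comb.
  + split; auto.
  + intros b [b0 [Bb ->]]. rewrite SmTm; auto.
  + intros b1 b2 [c1 [_ ->]] [c2 [_ ->]] E. rewrite !SmTm in E. subst; auto.
  + intros b' Bb'. exists (Tm b'). split; [exists b'; auto|apply SmTm].
Qed.

End Main.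

Theorem corollary5 (k : bool) (p : R) (X : Banach (scalar_field k)) :
  1 <= p -> infinite_dim X ->
  maximal_spaceable p (fun x : nat -> X => lpplus p x /\ ~ weakly_summable p x).
Proof.
intros Hp _. apply main_result. lra.
Qed.
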